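(* Let $g\in U_n$. There exists $\zeta\in\mathfrak{u}_n$ with $\exp(\zeta)=g$ such that $[\zeta,\xi]=0$ for every $\xi\in\mathfrak{u}_n$ with $\exp(\xi)=g$.
   Context: $\mathfrak{u}_n$ is the Lie algebra of $U_n$ (skew-Hermitian $n\times n$ matrices) and $\exp$ is the matrix exponential. *)

(* Defs.v *)
(* Complex numbers: C = R[i] (mathcomp-real-closed) over R : realType.
   Topology on R[i]: the norm (modulus) topology, copied from R[i]^o;
   matrices get the product topology (matrix_topology.v). *)
From HB Require Import structures.
From mathcomp Require Import all_boot all_order all_algebra.
From mathcomp Require Import all_classical all_reals all_analysis.
From mathcomp Require Import complex.
Import Order.TTheory GRing.Theory Num.Theory.
Import numFieldTopology.Exports numFieldNormedType.Exports.
Set Implicit Arguments. Unset Strict Implicit. Unset Printing Implicit Defensive.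
Local Open Scope ring_scope.
Local Open Scope classical_set_scope.

#[non_forgetful_inheritance]
HB.instance Definition _ (R : rcfType) := PseudoPointedMetric.copy R[i] (R[i])^o.

Definition adjmx (R : rcfType) (n : nat) (A : 'M[R[i]]_n) : 'M[R[i]]_n :=
  (map_mx (@conjc R) A)^T.

Definition unitary_mx (R : rcfType) (n : nat) (g : 'M[R[i]]_n) : Prop :=
  g *m adjmx g = 1%:M /\ adjmx g *m g = 1%:M.

Definition skew_hermitian_mx (R : rcfType) (n : nat) (X : 'M[R[i]]_n) : Prop :=
  adjmx X = - X.

Definition mexp_partial (R : rcfType) (n : nat) (A : 'M[R[i]]_n) (N : nat)
  : 'M[R[i]]_n :=
  \sum_(k < N) ((k`!)%:R)^-1 *: (A ^+ k).

Definition mexp (R : realType) (n : nat) (A : 'M[R[i]]_n) : 'M[R[i]]_n :=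
  lim (mexp_partial A @ \oo).

Definition lie_bracket (R : rcfType) (n : nat) (X Y : 'M[R[i]]_n) : 'M[R[i]]_n :=
  X *m Y - Y *m X.

(* Main.v *)
Require Import Defs.
From HB Require Import structures.
From mathcomp Require Import all_boot all_order all_algebra.
From mathcomp Require Import all_classical all_reals all_analysis.
From mathcomp Require Import complex.
From mathcomp Require Import spectral sesquilinear lra.
Import Order.TTheory GRing.Theory Num.Theory.
Local Open Scope ring_scope.
Import Num.Def.
Import numFieldTopology.Exports numFieldNormedType.Exports.

Section S.
Local Open Scope classical_set_scope.
Local Open Scope complex_scope.
Context {R : realType}.
Lemma adjE n (A : 'M[R[i]]_n) : adjmx A = (A ^t conjC)%sesqui.
Proof. by rewrite /adjmx map_trmx. Qed.
Lemma normC_real (r : R) : `|r%:C| = `|r|%:C.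
Proof. by rewrite normc_def /= expr0n /= addr0 sqrtr_sqr. Qed.

Lemma real_complex_cont : continuous (real_complex R).
Proof.
move=> x; apply/(@cvgrPdist_lt _ (R[i]^o)) => e e0.
move: e0; case: e => e1 e2; rewrite ltcE /= => /andP[/eqP e20 e10].
have := @cvgr_dist_lt _ R _ (nbhs x) _ id x (@cvg_id _ (nbhs x)) _ e10.
move=> h; near=> y.
rewrite -rmorphB normC_real ltcE /= e20 eqxx /=.
near: y; exact: h.
Unshelve. all: by end_near. Qed.

Lemma cvg_complex (u v : nat -> R) a b : u @ \oo --> a -> v @ \oo --> b ->
  (fun k => Complex (u k) (v k)) @ \oo --> Complex a b.
Proof.
move=> hu hv.
have -> : (fun k => Complex (u k) (v k)) = (fun k => (u k)%:C + 'i * (v k)%:C).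
  by apply/funext => k; rewrite [LHS]complexE.
rewrite [Complex a b]complexE /=.
apply: (@cvgD _ (R[i]^o)); first exact: (continuous_cvg _ (@real_complex_cont a)).
apply: cvgMr; exact: (continuous_cvg _ (@real_complex_cont b)).
Qed.

Definition ps_s (N : nat) (z : R[i]) : R[i] := \sum_(k < N) ((k`!)%:R)^-1 * z ^+ k.

Lemma iexp_even (t : R) m : (Complex 0 t) ^+ (m.*2) = ((-1) ^+ m * t ^+ (m.*2))%:C.
Proof.
have h2 : (Complex 0 t) ^+ 2 = (- t ^+ 2)%:C.
  by rewrite expr2; apply/eqP; rewrite eq_complex /= !mul0r mulr0 sub0r addr0 expr2 !eqxx.
by rewrite -mul2n exprM h2 -rmorphXn /= -[- t ^+ 2]mulN1r exprMn -exprM.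
Qed.

Lemma iexp_odd (t : R) m : (Complex 0 t) ^+ (m.*2.+1) = Complex 0 ((-1) ^+ m * t ^+ (m.*2.+1)).
Proof.
rewrite exprSr iexp_even; apply/eqP; rewrite eq_complex /= exprSr.
by rewrite !mulr0 !mul0r subr0 addr0 mulrA !eqxx.
Qed.

Lemma exp_term (t : R) k :
  ((k`!)%:R)^-1 * (Complex 0 t) ^+ k = Complex (cos_coeff t k) (sin_coeff t k).
Proof.
have hc : ((k`!)%:R : R[i])^-1 = ((k`!)%:R^-1 : R)%:C by rewrite fmorphV rmorph_nat.
rewrite hc; have := odd_double_half k; case: (odd k) => /= <-.
  rewrite iexp_odd /cos_coeff /sin_coeff /= odd_double /= doubleK.
  apply/eqP; rewrite eq_complex /=; apply/andP; split; apply/eqP; rewrite /=.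
    by rewrite !mul0r !mulr0 subr0.
  by rewrite mul0r addr0 mul1r mulrC.
rewrite iexp_even /cos_coeff /sin_coeff /= odd_double /= doubleK.
apply/eqP; rewrite eq_complex /=; apply/andP; split; apply/eqP; rewrite /=.
  by rewrite mulr0 subr0 mul1r mulrC.
by rewrite !mul0r !mulr0 addr0.
Qed.

Lemma ps_s_i (t : R) N : ps_s N (Complex 0 t) = Complex (series (cos_coeff t) N) (series (sin_coeff t) N).
Proof.
rewrite /ps_s /series /=; under eq_bigr do rewrite exp_term.
elim: N => [|N IH]; first by rewrite big_ord0 !big_geq.
rewrite (big_ord_recr N) /= IH. rewrite (big_nat_recr N) // (big_nat_recr N) //.
Qed.

Lemma ps_s_cvg (t : R) : ps_s ^~ (Complex 0 t) @ \oo --> Complex (cos t) (sin t).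
Proof.
have -> : ps_s ^~ (Complex 0 t) = fun N => Complex (series (cos_coeff t) N) (series (sin_coeff t) N).
  by apply/funext => N; rewrite ps_s_i.
apply: cvg_complex.
  rewrite cos.unlock; exact: (@is_cvg_series_cos_coeff R t).
rewrite sin.unlock; exact: (@is_cvg_series_sin_coeff R t).
Qed.

Lemma cvg_bigsum_seq (I : Type) (r : seq I) (f : I -> nat -> R[i]) (l : I -> R[i]) :
  (forall i, f i @ \oo --> l i) ->
  (fun N => \sum_(i <- r) f i N) @ \oo --> \sum_(i <- r) l i.
Proof.
move=> hf; elim: r => [|a r IH].
  rewrite big_nil; under eq_fun do rewrite big_nil; exact: cvg_cst.
rewrite big_cons; under eq_fun do rewrite big_cons.
exact: (@cvgD _ (R[i]^o) _ _ _ _ _ _ _ (hf a) IH).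
Qed.

Lemma cvg_mx_entry m n (u : nat -> 'M[R[i]]_(m, n)) (L : 'M[R[i]]_(m, n)) :
  (forall i j, (fun N => u N i j) @ \oo --> L i j) -> u @ \oo --> L.
Proof.
move=> h A [P hP sPA].
have H : \forall N \near \oo, forall i, forall j, P i j (u N i j).
  apply: filter_forall => i; apply: filter_forall => j; exact: h i j _ (hP i j).
near=> N; apply: sPA; near: N; exact: H.
Unshelve. all: by end_near. Qed.

Lemma cvg_conj n (A B : 'M[R[i]]_n) (u : nat -> 'rV[R[i]]_n) (v : 'rV[R[i]]_n) :
  (forall j, (fun N => u N 0 j) @ \oo --> v 0 j) ->
  (fun N => A *m diag_mx (u N) *m B) @ \oo --> A *m diag_mx v *m B.
Proof.
move=> h; apply: cvg_mx_entry => i j.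
rewrite -mulmxA mul_diag_mx mxE.
under eq_fun do rewrite -mulmxA mul_diag_mx mxE.
apply: cvg_bigsum_seq => k.
under eq_fun do rewrite mxE.
rewrite mxE.
apply: cvgMr; apply: cvgMl; exact: h.
Qed.

Lemma diag_mxM n (d e : 'rV[R[i]]_n) :
  diag_mx d *m diag_mx e = diag_mx (\row_j (d 0 j * e 0 j)).
Proof.
apply/matrixP => i j; rewrite mul_diag_mx !mxE.
by case: (i == j); rewrite ?mulr1n ?mulr0n ?mulr0.
Qed.

Lemma diag_mxX n (d : 'rV[R[i]]_n) k :
  diag_mx d ^+ k = diag_mx (\row_j (d 0 j ^+ k)).
Proof.
elim: k => [|k IH].
  rewrite expr0 -idmxE; apply/matrixP => i j; rewrite !mxE expr0.
  by case: (i == j).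
by rewrite exprS IH -mulmxE diag_mxM; congr diag_mx; apply/rowP => j; rewrite !mxE exprS.
Qed.

Lemma conj_pow n (Q D P : 'M[R[i]]_n) k : P *m Q = 1%:M -> Q *m P = 1%:M ->
  (Q *m D *m P) ^+ k = Q *m D ^+ k *m P.
Proof.
move=> PQ QP; elim: k => [|k IH]; first by rewrite !expr0 -idmxE mulmx1.
rewrite exprS IH exprS -!mulmxE !mulmxA -[Q *m D *m P *m Q]mulmxA PQ mulmx1.
done.
Qed.

Lemma ps_conj n (Q P : 'M[R[i]]_n) d N : P *m Q = 1%:M -> Q *m P = 1%:M ->
  mexp_partial (Q *m diag_mx d *m P) N = Q *m diag_mx (\row_j ps_s N (d 0 j)) *m P.
Proof.
move=> PQ QP; rewrite /mexp_partial.
under eq_bigr do rewrite conj_pow // diag_mxX scalemxAl scalemxAr.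
rewrite -mulmx_suml -mulmx_sumr; congr (_ *m _ *m _).
apply/matrixP => i j; rewrite summxE !mxE /ps_s.
under eq_bigr do rewrite !mxE.
case: (i == j); rewrite ?mulr1n //.
by rewrite mulr0n big1 // => k _; rewrite mulr0n mulr0.
Qed.

Lemma adjM n (A B : 'M[R[i]]_n) : adjmx (A *m B) = adjmx B *m adjmx A.
Proof. by rewrite !adjE trmx_mul map_mxM. Qed.

Lemma adjK n (A : 'M[R[i]]_n) : adjmx (adjmx A) = A.
Proof. by rewrite !adjE trmxCK. Qed.

Lemma adj_diag n (d : 'rV[R[i]]_n) : adjmx (diag_mx d) = diag_mx (\row_j conjc (d 0 j)).
Proof.
apply/matrixP => i j; rewrite /adjmx !mxE eq_sym.
case: eqP => [->|_]; rewrite ?mulr1n ?mulr0n //.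
exact: rmorph0.
Qed.

Lemma decomp n (A : 'M[R[i]]_n) : A \is normalmx -> exists (P : 'M[R[i]]_n) (d : 'rV[R[i]]_n),
  [/\ P *m adjmx P = 1%:M, adjmx P *m P = 1%:M & A = adjmx P *m diag_mx d *m P].
Proof.
move=> /orthomx_spectralP hA; exists (spectralmx A), (spectral_diag A).
have U := spectral_unitarymx A.
have PQ : spectralmx A *m adjmx (spectralmx A) = 1%:M by rewrite adjE; exact/unitarymxP.
split => //; first exact: mulmx1C.
by rewrite adjE -invmx_unitary.
Qed.

Lemma conj_cancel n (Q P X Y : 'M[R[i]]_n) : P *m Q = 1%:M ->
  Q *m X *m P = Q *m Y *m P -> X = Y.
Proof.
move=> PQ h.
have e : forall Z, P *m (Q *m Z *m P) *m Q = Z.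
  by move=> Z; rewrite !mulmxA PQ mul1mx -mulmxA PQ mulmx1.
by rewrite -(e X) h e.
Qed.

Definition theta (l : R[i]) : R :=
  if 0 <= complex.Im l then acos (complex.Re l) else - acos (complex.Re l).

Lemma theta_spec (l : R[i]) : l * conjc l = 1 ->
  Complex (cos (theta l)) (sin (theta l)) = l.
Proof.
case: l => a b /(congr1 (@complex.Re R)) /= h.
have hab : a ^+ 2 + b ^+ 2 = 1 by rewrite -h !expr2 mulrN opprK.
have ha : -1 <= a <= 1 by apply/andP; split; nra.
have hs : sin (acos a) = `|b|.
  by rewrite sin_acos // -hab addrC addKr sqrtr_sqr.
have hc : cos (acos a) = a.
  by rewrite acosK.
rewrite /theta /=; case: ifP => hb.
  by rewrite hc hs ger0_norm.
by rewrite cosN sinN hc hs ltr0_norm ?opprK // ltNge hb.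
Qed.

Lemma adj_conj n (Q P : 'M[R[i]]_n) (D : 'M[R[i]]_n) : Q = adjmx P ->
  adjmx (Q *m D *m P) = Q *m adjmx D *m P.
Proof. by move=> ->; rewrite !adjM adjK mulmxA. Qed.

Lemma conj_mul n (Q P D E : 'M[R[i]]_n) : P *m Q = 1%:M ->
  (Q *m D *m P) *m (Q *m E *m P) = Q *m (D *m E) *m P.
Proof. by move=> PQ; rewrite !mulmxA -[Q *m D *m P *m Q]mulmxA PQ mulmx1. Qed.

Lemma mexp_conj n (Q P : 'M[R[i]]_n) (u v : 'rV[R[i]]_n) : P *m Q = 1%:M -> Q *m P = 1%:M ->
  (forall j, (fun N => ps_s N (u 0 j)) @ \oo --> v 0 j) ->
  mexp (Q *m diag_mx u *m P) = Q *m diag_mx v *m P.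
Proof.
move=> PQ QP h; rewrite /mexp.
have -> : mexp_partial (Q *m diag_mx u *m P) = fun N => Q *m diag_mx (\row_j ps_s N (u 0 j)) *m P.
  by apply/funext => N; rewrite ps_conj.
apply: cvg_lim; first exact: norm_hausdorff.
apply: cvg_conj => j; under eq_fun do rewrite mxE.
exact: h.
Qed.
End S.

Theorem mainTheorem3 (R : realType) (n : nat) (g : 'M[R[i]]_n) :
  unitary_mx g ->
  exists zeta : 'M[R[i]]_n,
    [/\ skew_hermitian_mx zeta, mexp zeta = g &
        forall xi : 'M[R[i]]_n,
          skew_hermitian_mx xi -> mexp xi = g -> lie_bracket zeta xi = 0].
Proof.
move=> [gg1 g1g].
have gN : g \is normalmx by apply/normalmxP; rewrite -!adjE gg1 g1g.
have [P [d [PQ QP gE]]] := decomp _ _ gN.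
have [Q hQ] : exists Q, Q = adjmx P by eexists.
rewrite -hQ in PQ QP gE.
have hd : forall j, d 0 j * conjc (d 0 j) = 1.
  move=> j.
  have : Q *m (diag_mx d *m adjmx (diag_mx d)) *m P = Q *m 1%:M *m P.
    by rewrite -(@conj_mul _ _ _ _ _ _ PQ) -(@adj_conj _ _ _ _ _ hQ) -gE gg1 mulmx1.
  move=> /(@conj_cancel _ _ _ _ _ _ PQ) /matrixP /(_ j j).
  by rewrite adj_diag mulmx_diag !mxE eqxx !mulr1n.
pose z := \row_j Complex 0 (theta (d 0 j)).
exists (Q *m diag_mx z *m P); split.
- rewrite /skew_hermitian_mx (@adj_conj _ _ _ _ _ hQ) adj_diag -mulNmx -mulmxN.
  congr (_ *m _ *m _); apply/matrixP => i j; rewrite !mxE.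
  case: eqP => _; rewrite ?mulr1n ?mulr0n ?oppr0 //.
  by apply/eqP; rewrite eq_complex /= oppr0 !eqxx.
- rewrite gE; apply: mexp_conj => // j; rewrite mxE.
  by have := ps_s_cvg (theta (d 0 j)); rewrite theta_spec.
move=> xi xiS xiE.
have xN : xi \is normalmx.
  by apply/normalmxP; rewrite -!adjE xiS mulmxN mulNmx.
have [P' [e [PQ' QP' xE]]] := decomp _ _ xN.
have [Q' hQ'] : exists Q', Q' = adjmx P' by eexists.
rewrite -hQ' in PQ' QP' xE.
have he : forall j, e 0 j = Complex 0 (complex.Im (e 0 j)).
  move=> j.
  have : Q' *m adjmx (diag_mx e) *m P' = Q' *m (- diag_mx e) *m P'.
    by rewrite -(@adj_conj _ _ _ _ _ hQ') -xE xiS xE mulmxN mulNmx.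
  move=> /(@conj_cancel _ _ _ _ _ _ PQ') /matrixP /(_ j j).
  rewrite adj_diag !mxE eqxx !mulr1n.
  case: (e 0 j) => a b /eqP; rewrite eq_complex /= => /andP[/eqP ha _].
  by apply/eqP; rewrite eq_complex /= eqxx andbT; apply/eqP; lra.
pose c := \row_j Complex (cos (complex.Im (e 0 j))) (sin (complex.Im (e 0 j))).
have hg : g = Q' *m diag_mx c *m P'.
  rewrite -xiE xE; apply: mexp_conj => // j; rewrite mxE.
  by have := ps_s_cvg (complex.Im (e 0 j)); rewrite -he.
have comm : xi *m g = g *m xi.
  by rewrite hg xE !(@conj_mul _ _ _ _ _ _ PQ') diag_mxC.
have [M hM] : exists M, M = P *m xi *m Q by eexists.
have DP : diag_mx d *m P = P *m g.
  by rewrite gE !mulmxA PQ mul1mx.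
have GQ : g *m Q = Q *m diag_mx d.
  by rewrite gE -!mulmxA PQ mulmx1.
have DM : diag_mx d *m M = M *m diag_mx d.
  rewrite hM !mulmxA DP -!mulmxA -GQ; congr (P *m _).
  by rewrite !mulmxA comm.
have ZM : diag_mx z *m M = M *m diag_mx z.
  apply/matrixP => i j; move/matrixP: DM => /(_ i j).
  rewrite !mul_diag_mx !mul_mx_diag !mxE => h.
  have [->|nz] := eqVneq (M i j) 0; first by rewrite mulr0 mul0r.
  have dij : d 0 i = d 0 j.
    by apply: (mulIf nz); rewrite h mulrC.
  by rewrite dij mulrC.
have xM : xi = Q *m M *m P.
  by rewrite hM !mulmxA QP mul1mx -mulmxA QP mulmx1.
rewrite /lie_bracket xM !(@conj_mul _ _ _ _ _ _ PQ) ZM subrr.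
done.
Qed.
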